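(* Let $\lambda\in\mathbb{C}\setminus(\mathbb{R}\cup S^1)$, $\mu\in\mathbb{C}\setminus\{0,1\}$, and $a,b\in\mathbb{C}^n$ with $a\neq b$. Let $G$ be the group generated by $f=(a,\lambda)$ and $g=(b,\mu)$, and let $L=\mathbb{C}(b-a)+a=\{a+t(b-a):t\in\mathbb{C}\}$. Then $\overline{G_1(z)}=L$ for every $z\in L$; in particular $\overline{G(z)}=L$ for every $z\in L$.
   Context: $S^1=\{z\in\mathbb{C}:|z|=1\}$. For $c\in\mathbb{C}^n$ and $\nu\in\mathbb{C}\setminus\{0,1\}$, $(c,\nu)$ denotes the map $z\mapsto\nu(z-c)+c$ of $\mathbb{C}^n$. $G_1$ is the set of translations $z\mapsto z+v$ belonging to $G$, and $G_1(z)=\{T(z):T\in G_1\}$; $G(z)=\{h(z):h\in G\}$. *)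

(* Defs.v *)
From Stdlib Require Import Reals.
From Stdlib Require Fin.
Open Scope R_scope.

Definition Cx : Type := (R * R)%type.
Definition Cre (z : Cx) : R := fst z.
Definition Cim (z : Cx) : R := snd z.
Definition RtoC (r : R) : Cx := (r, 0).
Definition Cx0 : Cx := (0, 0).
Definition Cx1 : Cx := (1, 0).
Definition Cadd (z w : Cx) : Cx := (fst z + fst w, snd z + snd w).
Definition Copp (z : Cx) : Cx := (- fst z, - snd z).
Definition Csub (z w : Cx) : Cx := Cadd z (Copp w).
Definition Cmul (z w : Cx) : Cx :=
  (fst z * fst w - snd z * snd w, fst z * snd w + snd z * fst w).
Definition Cmod (z : Cx) : R := sqrt (fst z ^ 2 + snd z ^ 2).
Definition Cinv (z : Cx) : Cx :=
  (fst z / (fst z ^ 2 + snd z ^ 2), - snd z / (fst z ^ 2 + snd z ^ 2)).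

Definition Cn (n : nat) : Type := Fin.t n -> Cx.
Definition vadd {n} (z w : Cn n) : Cn n := fun i => Cadd (z i) (w i).
Definition vsub {n} (z w : Cn n) : Cn n := fun i => Csub (z i) (w i).
Definition vscal {n} (t : Cx) (z : Cn n) : Cn n := fun i => Cmul t (z i).

(* (c, nu) : z |-> nu (z - c) + c *)
Definition homot {n} (c : Cn n) (nu : Cx) : Cn n -> Cn n :=
  fun z => vadd (vscal nu (vsub z c)) c.

(* Since f, g are bijections with inverses (a, 1/lam), (b, 1/mu), the group
   they generate is the set of all finite compositions of f, f^-1, g, g^-1
   (including the empty composition = identity). *)
Inductive InGroup {n} (a b : Cn n) (lam mu : Cx) : (Cn n -> Cn n) -> Prop :=
| G_id : InGroup a b lam mu (fun z => z)
| G_f  : forall h, InGroup a b lam mu h ->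
           InGroup a b lam mu (fun z => homot a lam (h z))
| G_fi : forall h, InGroup a b lam mu h ->
           InGroup a b lam mu (fun z => homot a (Cinv lam) (h z))
| G_g  : forall h, InGroup a b lam mu h ->
           InGroup a b lam mu (fun z => homot b mu (h z))
| G_gi : forall h, InGroup a b lam mu h ->
           InGroup a b lam mu (fun z => homot b (Cinv mu) (h z)).

Definition InG1 {n} (a b : Cn n) (lam mu : Cx) (h : Cn n -> Cn n) : Prop :=
  InGroup a b lam mu h /\ exists v : Cn n, forall z, h z = vadd z v.

Definition orbitG {n} (a b : Cn n) (lam mu : Cx) (z : Cn n) (w : Cn n) : Prop :=
  exists h, InGroup a b lam mu h /\ h z = w.
Definition orbitG1 {n} (a b : Cn n) (lam mu : Cx) (z : Cn n) (w : Cn n) : Prop :=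
  exists h, InG1 a b lam mu h /\ h z = w.

(* topological closure in Cx^n (product / sup-norm topology = usual one) *)
Definition closure {n} (S : Cn n -> Prop) (w : Cn n) : Prop :=
  forall eps : R, eps > 0 ->
    exists s, S s /\ forall i, Cmod (Csub (w i) (s i)) < eps.

Definition line {n} (a b : Cn n) (w : Cn n) : Prop :=
  exists t : Cx, w = vadd a (vscal t (vsub b a)).

(* Main.v *)
Require Import Defs.
From Stdlib Require Import Reals Lra Psatz Classical FunctionalExtensionality Field ZArith.
Open Scope R_scope.

Definition Cdiv (x y : Cx) : Cx := Cmul x (Cinv y).

Ltac cxd := repeat match goal with x : Cx |- _ => destruct x | x : (R*R)%type |- _ => destruct x end;
  unfold Cdiv, Csub in *; unfold Cadd, Cmul, Copp, Cinv, RtoC, Cx0, Cx1, Cre, Cim in *; simpl in *.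

Lemma Cx_ring : ring_theory Cx0 Cx1 Cadd Cmul Csub Copp (@eq Cx).
Proof. constructor; intros; cxd; f_equal; ring. Qed.

Lemma Cx_nz (x y : R) : (x, y) <> Cx0 -> x ^ 2 + y ^ 2 <> 0.
Proof. intros H E. apply H. unfold Cx0. assert (x = 0) by nra. assert (y = 0) by nra. subst; auto. Qed.

Lemma Cx_field : field_theory Cx0 Cx1 Cadd Cmul Csub Copp Cdiv Cinv (@eq Cx).
Proof.
  constructor.
  - exact Cx_ring.
  - unfold Cx1, Cx0; intro H; injection H; lra.
  - reflexivity.
  - intros [x y] Hp. pose proof (Cx_nz x y Hp). unfold Cmul, Cinv, Cx1; simpl. f_equal; field; intro E; apply H; nra.
Qed.

Add Field Cxfield : Cx_field.

Lemma Cmod_ge0 z : 0 <= Cmod z.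
Proof. apply sqrt_pos. Qed.

Lemma Cmod_mul z w : Cmod (Cmul z w) = Cmod z * Cmod w.
Proof. destruct z as [x y], w as [u v]; unfold Cmod, Cmul; cbn [fst snd].
  rewrite <- sqrt_mult by nra. f_equal. ring. Qed.

Lemma Cmod_triangle z w : Cmod (Cadd z w) <= Cmod z + Cmod w.
Proof. destruct z as [x y], w as [u v]; unfold Cmod, Cadd; cbn [fst snd].
  pose proof (sqrt_pos (x^2+y^2)). pose proof (sqrt_pos (u^2+v^2)).
  assert (Hx := Rsqr_sqrt (x^2+y^2) ltac:(nra)). assert (Hu := Rsqr_sqrt (u^2+v^2) ltac:(nra)).
  unfold Rsqr in *.
  set (A := sqrt (x^2+y^2)) in *. set (B := sqrt (u^2+v^2)) in *.
  assert (x*u + y*v <= A*B).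
  { assert (E: (A*B)^2 = (x^2+y^2)*(u^2+v^2)) by (rewrite <- Hx, <- Hu; ring).
    assert ((x*u+y*v)^2 <= (A*B)^2) by (rewrite E; pose proof (pow2_ge_0 (x*v-y*u)); nra).
    assert (0 <= A*B) by (apply Rmult_le_pos; auto).
    destruct (Rle_or_lt (x*u+y*v) (A*B)); auto. nra. }
  apply Rle_trans with (sqrt (Rsqr (A+B))); [apply sqrt_le_1_alt; unfold Rsqr; assert (E2: (x+u)^2+(y+v)^2 = A*A + B*B + 2*(x*u+y*v)) by (rewrite Hx, Hu; ring); rewrite E2; nra | rewrite sqrt_Rsqr; lra]. Qed.

Lemma Cmod_R r : Cmod (RtoC r) = Rabs r.
Proof. unfold Cmod, RtoC; cbn [fst snd]. rewrite <- sqrt_Rsqr_abs. f_equal. unfold Rsqr; ring. Qed.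

Lemma Cmod_opp z : Cmod (Copp z) = Cmod z.
Proof. destruct z; unfold Cmod, Copp; cbn [fst snd]. f_equal; ring. Qed.

Lemma Cmod_sub_sym z w : Cmod (Csub z w) = Cmod (Csub w z).
Proof. replace (Csub z w) with (Copp (Csub w z)) by ring. apply Cmod_opp. Qed.

Lemma Cmod_1 : Cmod Cx1 = 1.
Proof. unfold Cmod, Cx1; cbn [fst snd]. replace (1^2+0^2) with 1 by ring. apply sqrt_1. Qed.

Lemma Cmod_eq0 z : Cmod z = 0 -> z = Cx0.
Proof. destruct z as [x y]; unfold Cmod; cbn [fst snd]; intro H. apply sqrt_eq_0 in H; [|nra].
  unfold Cx0. assert (x = 0) by nra. assert (y = 0) by nra. subst; auto. Qed.

Lemma Cmod_pos z : z <> Cx0 -> 0 < Cmod z.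
Proof. intro H. destruct (Cmod_ge0 z); auto. exfalso; apply H, Cmod_eq0; auto. Qed.

Lemma Cmod_small z : (forall e, e > 0 -> Cmod z < e) -> z = Cx0.
Proof. intro H. apply Cmod_eq0. destruct (Cmod_ge0 z) as [h|h]; auto.
  specialize (H _ h); lra. Qed.

Lemma Cmod_lin (x y : R) (r : Cx) : Cmod (Cadd (RtoC x) (Cmul (RtoC y) r)) <= Rabs x + Rabs y * Cmod r.
Proof. eapply Rle_trans. apply Cmod_triangle. rewrite Cmod_mul, !Cmod_R. lra. Qed.

Ltac vext := apply functional_extensionality; intro; unfold homot; unfold vadd, vsub, vscal.

Lemma InGroup_comp {n} (a b : Cn n) lam mu h1 h2 :
  InGroup a b lam mu h1 -> InGroup a b lam mu h2 -> InGroup a b lam mu (fun z => h1 (h2 z)).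
Proof. intros H1 H2; induction H1; [exact H2| apply G_f | apply G_fi | apply G_g | apply G_gi]; auto. Qed.

Lemma homot_inv1 {n} (c : Cn n) nu x : nu <> Cx0 -> homot c (Cinv nu) (homot c nu x) = x.
Proof. intro H; vext; field; auto. Qed.
Lemma homot_inv2 {n} (c : Cn n) nu x : nu <> Cx0 -> homot c nu (homot c (Cinv nu) x) = x.
Proof. intro H; vext; field; auto. Qed.

Lemma Cinv_nz (x : Cx) : x <> Cx0 -> Cinv x <> Cx0.
Proof. intros H E. assert (Cmul (Cinv x) x = Cx1) by (field; auto). rewrite E in H0.
  replace (Cmul Cx0 x) with Cx0 in H0 by ring. unfold Cx0, Cx1 in H0; injection H0; lra. Qed.

Lemma InGroup_inv {n} (a b : Cn n) lam mu h : lam <> Cx0 -> mu <> Cx0 ->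
  InGroup a b lam mu h -> exists h', InGroup a b lam mu h' /\ forall z, h' (h z) = z.
Proof.
  intros Hl Hm H; induction H as [|h H [h' [H' E]]|h H [h' [H' E]]|h H [h' [H' E]]|h H [h' [H' E]]].
  - exists (fun z => z); split; [constructor|auto].
  - exists (fun z => h' (homot a (Cinv lam) z)); split.
    + apply InGroup_comp; auto. apply G_fi, G_id.
    + intro z; rewrite homot_inv1; auto.
  - exists (fun z => h' (homot a lam z)); split.
    + apply InGroup_comp; auto. apply G_f, G_id.
    + intro z; rewrite homot_inv2; auto.
  - exists (fun z => h' (homot b (Cinv mu) z)); split.
    + apply InGroup_comp; auto. apply G_gi, G_id.
    + intro z; rewrite homot_inv1; auto.
  - exists (fun z => h' (homot b mu z)); split.
    + apply InGroup_comp; auto. apply G_g, G_id.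
    + intro z; rewrite homot_inv2; auto.
Qed.

Definition Tr {n} (a b : Cn n) lam mu (s : Cx) : Prop :=
  exists h, InGroup a b lam mu h /\ forall z, h z = vadd z (vscal s (vsub b a)).

Lemma Tr_add {n} (a b : Cn n) lam mu s t : Tr a b lam mu s -> Tr a b lam mu t -> Tr a b lam mu (Cadd s t).
Proof. intros [h1 [H1 E1]] [h2 [H2 E2]]. exists (fun z => h1 (h2 z)); split.
  apply InGroup_comp; auto. intro z; rewrite E2, E1. vext; ring. Qed.

Lemma Tr_opp {n} (a b : Cn n) lam mu s : lam <> Cx0 -> mu <> Cx0 -> Tr a b lam mu s -> Tr a b lam mu (Copp s).
Proof. intros Hl Hm [h [H E]]. destruct (InGroup_inv a b lam mu h Hl Hm H) as [h' [H' E']].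
  exists h'; split; auto. intro z.
  rewrite <- (E' (vadd z (vscal (Copp s) (vsub b a)))). f_equal. rewrite E. vext; ring. Qed.

Lemma Tr_lam {n} (a b : Cn n) lam mu s : lam <> Cx0 -> Tr a b lam mu s -> Tr a b lam mu (Cmul lam s).
Proof. intros Hl [h [H E]]. exists (fun z => homot a lam (h (homot a (Cinv lam) z))); split.
  apply G_f, InGroup_comp; auto; apply G_fi, G_id.
  intro z; rewrite E. vext; field; auto. Qed.

Lemma Tr_invlam {n} (a b : Cn n) lam mu s : lam <> Cx0 -> Tr a b lam mu s -> Tr a b lam mu (Cmul (Cinv lam) s).
Proof. intros Hl [h [H E]]. exists (fun z => homot a (Cinv lam) (h (homot a lam z))); split.
  apply G_fi, InGroup_comp; auto; apply G_f, G_id.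
  intro z; rewrite E. vext; field; auto. Qed.

Lemma Tr_base {n} (a b : Cn n) lam mu : lam <> Cx0 -> mu <> Cx0 ->
  Tr a b lam mu (Cmul (Csub lam Cx1) (Csub Cx1 mu)).
Proof. intros Hl Hm.
  exists (fun z => homot a lam (homot b mu (homot a (Cinv lam) (homot b (Cinv mu) z)))); split.
  apply G_f, G_g, G_fi, G_gi, G_id.
  intro z. vext; field; auto. Qed.

Lemma line_homot_a {n} (a b : Cn n) nu z : line a b z -> line a b (homot a nu z).
Proof. intros [t ->]. exists (Cmul nu t). vext; ring. Qed.
Lemma line_homot_b {n} (a b : Cn n) nu z : line a b z -> line a b (homot b nu z).
Proof. intros [t ->]. exists (Cadd (Cmul nu (Csub t Cx1)) Cx1). vext; ring. Qed.

Lemma InGroup_line {n} (a b : Cn n) lam mu h z : InGroup a b lam mu h -> line a b z -> line a b (h z).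
Proof. intros H Hz; induction H; auto using line_homot_a, line_homot_b. Qed.

Lemma RtoC_add x y : RtoC (x + y) = Cadd (RtoC x) (RtoC y).
Proof. unfold RtoC, Cadd; simpl; f_equal; ring. Qed.
Lemma RtoC_sub x y : RtoC (x - y) = Csub (RtoC x) (RtoC y).
Proof. unfold RtoC, Csub, Cadd, Copp; simpl; f_equal; ring. Qed.
Lemma RtoC_opp x : RtoC (- x) = Copp (RtoC x).
Proof. unfold RtoC, Copp; simpl; f_equal; ring. Qed.

Fixpoint Cpow (r : Cx) (k : nat) : Cx := match k with O => Cx1 | S k => Cmul r (Cpow r k) end.
Lemma Cmod_pow r k : Cmod (Cpow r k) = Cmod r ^ k.
Proof. induction k; simpl; [apply Cmod_1| rewrite Cmod_mul, IHk; auto]. Qed.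

Lemma Cmul_nz x y : x <> Cx0 -> y <> Cx0 -> Cmul x y <> Cx0.
Proof. intros Hx Hy E. apply Hy. replace y with (Cmul (Cinv x) (Cmul x y)) by (field; auto).
  rewrite E; ring. Qed.

Lemma density (P : Cx -> Prop) (rho w0 : Cx) :
  (forall s t, P s -> P t -> P (Cadd s t)) -> (forall s, P s -> P (Copp s)) ->
  (forall s, P s -> P (Cmul rho s)) -> P w0 -> w0 <> Cx0 -> Cim rho <> 0 -> Cmod rho < 1 ->
  forall t e, e > 0 -> exists s, P s /\ Cmod (Csub t s) < e.
Proof.
  intros Hadd Hopp Hrho Hw0 Hw0nz Hrim Hrmod t e He.
  assert (Pnat : forall w, P w -> forall k, P (Cmul (RtoC (INR k)) w)).
  { intros w Hw k; induction k.
    - replace (Cmul (RtoC (INR 0)) w) with (Cadd w (Copp w)); auto.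
      simpl. change (RtoC 0) with Cx0. ring.
    - rewrite S_INR, RtoC_add. change (RtoC 1) with Cx1.
      replace (Cmul (Cadd (RtoC (INR k)) Cx1) w) with (Cadd (Cmul (RtoC (INR k)) w) w) by ring. auto. }
  assert (Pint : forall w, P w -> forall m, P (Cmul (RtoC (IZR m)) w)).
  { intros w Hw m. destruct (Z.le_gt_cases 0 m) as [Hm|Hm].
    - rewrite <- (Z2Nat.id m Hm), <- INR_IZR_INZ. auto.
    - replace m with (- Z.of_nat (Z.to_nat (- m)))%Z by lia.
      rewrite opp_IZR, <- INR_IZR_INZ, RtoC_opp.
      replace (Cmul (Copp (RtoC (INR (Z.to_nat (- m))))) w) with (Copp (Cmul (RtoC (INR (Z.to_nat (- m)))) w)) by ring.
      auto. }
  assert (Ppow : forall k, P (Cmul (Cpow rho k) w0)).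
  { induction k; simpl. replace (Cmul Cx1 w0) with w0 by ring; auto.
    replace (Cmul (Cmul rho (Cpow rho k)) w0) with (Cmul rho (Cmul (Cpow rho k) w0)) by ring; auto. }
  set (c := Cmod w0) in *. assert (Hc : 0 < c) by (apply Cmod_pos; auto).
  set (r := Cmod rho) in *. assert (Hr0 : 0 <= r) by apply Cmod_ge0.
  assert (Hrho0 : rho <> Cx0) by (intro E; apply Hrim; rewrite E; reflexivity).
  assert (Hrp : 0 < r) by (apply Cmod_pos; auto).
  destruct (pow_lt_1_zero r ltac:(rewrite Rabs_pos_eq; lra) (e / (2 * c)) ltac:(apply Rdiv_lt_0_compat; lra)) as [N HN].
  specialize (HN N (le_n _)). rewrite Rabs_pos_eq in HN by (apply pow_le; lra).
  set (om := Cmul (Cpow rho N) w0).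
  assert (Hom : Cmod om = r ^ N * c) by (unfold om; rewrite Cmod_mul, Cmod_pow; reflexivity).
  assert (Homs : Cmod om * 2 < e).
  { rewrite Hom. apply Rmult_lt_compat_r with (r := c) in HN; auto.
    replace (e / (2 * c) * c) with (e / 2) in HN by (field; lra). lra. }
  assert (Hom0 : om <> Cx0).
  { intro E. assert (Cmod om = 0) by (rewrite E; unfold Cmod, Cx0; cbn [fst snd]; replace (0^2+0^2) with 0 by ring; apply sqrt_0).
    rewrite Hom in H. assert (0 < r ^ N) by (apply pow_lt; lra). nra. }
  set (u := Cmul t (Cinv om)).
  set (y := snd u / snd rho). set (x := fst u - y * fst rho).
  assert (Hu : u = Cadd (RtoC x) (Cmul (RtoC y) rho)).
  { unfold x, y. clearbody u. destruct u as [u1 u2], rho as [r1 r2]. unfold Cim in Hrim; simpl in *.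
    unfold Cadd, RtoC, Cmul; simpl. f_equal; field; auto. }
  assert (Ht : t = Cmul om u) by (unfold u; field; auto).
  set (m := up x). set (k := up y).
  exists (Cadd (Cmul (RtoC (IZR m)) om) (Cmul (RtoC (IZR k)) (Cmul rho om))).
  split.
  { assert (P om) by apply Ppow. apply Hadd; apply Pint; auto. }
  replace (Csub t (Cadd (Cmul (RtoC (IZR m)) om) (Cmul (RtoC (IZR k)) (Cmul rho om))))
    with (Cmul om (Cadd (RtoC (x - IZR m)) (Cmul (RtoC (y - IZR k)) rho))).
  2: { rewrite Ht, Hu, !RtoC_sub. ring. }
  rewrite Cmod_mul.
  pose proof (Cmod_lin (x - IZR m) (y - IZR k) rho) as HL. fold r in HL.
  destruct (archimed x) as [A1 A2]. destruct (archimed y) as [B1 B2]. fold m in A1, A2. fold k in B1, B2.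
  assert (Rabs (x - IZR m) <= 1) by (unfold Rabs; destruct Rcase_abs; lra).
  assert (Rabs (y - IZR k) <= 1) by (unfold Rabs; destruct Rcase_abs; lra).
  assert (Rabs (y - IZR k) * r <= 1) by (pose proof (Rabs_pos (y - IZR k)); nra).
  pose proof (Cmod_ge0 om). pose proof (Cmod_ge0 (Cadd (RtoC (x - IZR m)) (Cmul (RtoC (y - IZR k)) rho))).
  nra.
Qed.

Lemma fin_bound n (f : Fin.t n -> R) : exists M, 0 < M /\ forall j, f j <= M.
Proof.
  induction n.
  - exists 1; split; [lra| intro j; apply Fin.case0 with (p := j)].
  - destruct (IHn (fun j => f (Fin.FS j))) as [M [HM H]].
    exists (Rmax M (f Fin.F1)); split.
    + eapply Rlt_le_trans; [exact HM| apply Rmax_l].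
    + intro j. apply (Fin.caseS' j (fun j => f j <= Rmax M (f Fin.F1))).
      * apply Rmax_r.
      * intro p. eapply Rle_trans; [apply H| apply Rmax_l].
Qed.

Lemma line_closed {n} (a b : Cn n) (S : Cn n -> Prop) w :
  a <> b -> (forall s, S s -> line a b s) -> closure S w -> line a b w.
Proof.
  intros Hab HS Hw.
  set (d := vsub b a).
  assert (Hi : exists i, d i <> Cx0).
  { apply NNPP; intro H. apply Hab. apply functional_extensionality; intro i.
    assert (d i = Cx0) by (apply NNPP; intro H'; apply H; exists i; auto).
    unfold d, vsub in H0. replace (a i) with (Cadd (b i) (Copp (Csub (b i) (a i)))) by ring.
    rewrite H0. ring. }
  destruct Hi as [i Hi].
  exists (Cmul (Csub (w i) (a i)) (Cinv (d i))).
  apply functional_extensionality; intro j. unfold vadd, vscal. fold d.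
  assert (Csub (w j) (Cadd (a j) (Cmul (Cmul (Csub (w i) (a i)) (Cinv (d i))) (d j))) = Cx0).
  2: { replace (w j) with (Cadd (Csub (w j) (Cadd (a j) (Cmul (Cmul (Csub (w i) (a i)) (Cinv (d i))) (d j))))
                 (Cadd (a j) (Cmul (Cmul (Csub (w i) (a i)) (Cinv (d i))) (d j)))) by ring.
       rewrite H. ring. }
  apply Cmod_small; intros e He.
  set (c := Cmod (Cinv (d i)) * Cmod (d j)).
  assert (Hc : 0 <= c) by (apply Rmult_le_pos; apply Cmod_ge0).
  destruct (Hw (e / (1 + c)) ltac:(apply Rdiv_lt_0_compat; lra)) as [s [Hs Hsw]].
  destruct (HS s Hs) as [tau Htau].
  assert (Esj : s j = Cadd (a j) (Cmul tau (d j))) by (rewrite Htau; reflexivity).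
  assert (Esi : s i = Cadd (a i) (Cmul tau (d i))) by (rewrite Htau; reflexivity).
  replace (Csub (w j) (Cadd (a j) (Cmul (Cmul (Csub (w i) (a i)) (Cinv (d i))) (d j))))
    with (Cadd (Csub (w j) (s j)) (Cmul (Cmul (Csub (s i) (w i)) (Cinv (d i))) (d j))).
  2: { rewrite Esj, Esi. field. auto. }
  eapply Rle_lt_trans; [apply Cmod_triangle|].
  rewrite !Cmod_mul, (Cmod_sub_sym (s i)).
  pose proof (Hsw i). pose proof (Hsw j). pose proof (Cmod_ge0 (Csub (w i) (s i))).
  fold c. replace (Cmod (Csub (w i) (s i)) * Cmod (Cinv (d i)) * Cmod (d j)) with (Cmod (Csub (w i) (s i)) * c) by (unfold c; ring).
  assert (e / (1 + c) * (1 + c) = e) by (field; lra).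
  nra.
Qed.

Theorem lemma3p1 (n : nat) (lam mu : Cx) (a b : Cn n)
  (Hlam_real : Cim lam <> 0)
  (Hlam_circ : Cmod lam <> 1)
  (Hmu0 : mu <> Cx0) (Hmu1 : mu <> Cx1)
  (Hab : a <> b) :
  (forall z, line a b z ->
     forall w, closure (orbitG1 a b lam mu z) w <-> line a b w) /\
  (forall z, line a b z ->
     forall w, closure (orbitG a b lam mu z) w <-> line a b w).
Proof.
  assert (Hl0 : lam <> Cx0) by (intro E; apply Hlam_real; rewrite E; reflexivity).
  assert (HG : forall z, line a b z -> forall w, orbitG a b lam mu z w -> line a b w).
  { intros z Hz w [h [Hh <-]]. apply (InGroup_line a b lam mu); auto. }
  assert (HG1 : forall z w, orbitG1 a b lam mu z w -> orbitG a b lam mu z w).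
  { intros z w [h [[Hh _] E]]. exists h; auto. }
  assert (Hdens : forall t e, e > 0 -> exists s, Tr a b lam mu s /\ Cmod (Csub t s) < e).
  { assert (Hw0 : Cmul (Csub lam Cx1) (Csub Cx1 mu) <> Cx0).
    { apply Cmul_nz.
      - intro E. apply Hlam_real. replace lam with (Cadd (Csub lam Cx1) Cx1) by ring. rewrite E.
        unfold Cim, Cadd, Cx0, Cx1; simpl; ring.
      - intro E. apply Hmu1. replace mu with (Csub Cx1 (Csub Cx1 mu)) by ring. rewrite E. ring. }
    assert (Hadd : forall s t, Tr a b lam mu s -> Tr a b lam mu t -> Tr a b lam mu (Cadd s t)) by apply Tr_add.
    assert (Hopp : forall s, Tr a b lam mu s -> Tr a b lam mu (Copp s)) by (intros; apply Tr_opp; auto).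
    pose proof (Tr_base a b lam mu Hl0 Hmu0) as Hb.
    destruct (Rlt_or_le (Cmod lam) 1) as [Hlt|Hge].
    - apply (density _ lam (Cmul (Csub lam Cx1) (Csub Cx1 mu)) Hadd Hopp); auto.
      intros; apply Tr_lam; auto.
    - apply (density _ (Cinv lam) (Cmul (Csub lam Cx1) (Csub Cx1 mu)) Hadd Hopp); auto.
      + intros; apply Tr_invlam; auto.
      + destruct lam as [x y]. unfold Cim, Cinv in *; cbn [fst snd] in *.
        assert (D : x ^ 2 + y ^ 2 <> 0) by (apply Cx_nz; auto).
        unfold Rdiv; intro E. apply Rmult_integral in E. destruct E as [E|E]; [lra|].
        apply (Rinv_neq_0_compat _ D); auto.
      + assert (Hm : Cmod (Cinv lam) * Cmod lam = 1).
        { rewrite <- Cmod_mul. replace (Cmul (Cinv lam) lam) with Cx1 by (field; auto). apply Cmod_1. }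
        assert (Cmod lam > 1) by lra. pose proof (Cmod_ge0 (Cinv lam)). nra. }
  assert (Hmain : forall z, line a b z -> forall w, line a b w -> closure (orbitG1 a b lam mu z) w).
  { intros z [t0 ->] w [t ->] e He.
    destruct (fin_bound n (fun j => Cmod (vsub b a j))) as [M [HM HMb]].
    destruct (Hdens (Csub t t0) (e / M) ltac:(apply Rdiv_lt_0_compat; lra)) as [s [[h [Hh E]] Hs]].
    exists (h (vadd a (vscal t0 (vsub b a)))). split.
    - exists h; split; auto. split; auto. exists (vscal s (vsub b a)); auto.
    - intro i. rewrite E. unfold vadd, vscal.
      replace (Csub (Cadd (a i) (Cmul t (vsub b a i))) (Cadd (Cadd (a i) (Cmul t0 (vsub b a i))) (Cmul s (vsub b a i))))
        with (Cmul (Csub (Csub t t0) s) (vsub b a i)) by ring.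
      rewrite Cmod_mul. specialize (HMb i). simpl in HMb.
      pose proof (Cmod_ge0 (Csub (Csub t t0) s)). pose proof (Cmod_ge0 (vsub b a i)).
      assert (e / M * M = e) by (field; lra). nra. }
  split; intros z Hz w; split; intro H.
  - apply (line_closed a b (orbitG1 a b lam mu z) w Hab); auto. intros s Hs; apply (HG z Hz); auto.
  - apply Hmain; auto.
  - apply (line_closed a b (orbitG a b lam mu z) w Hab); auto. intros s Hs; apply (HG z Hz); auto.
  - intros e He. destruct (Hmain z Hz w H e He) as [s [Hs1 Hs2]]. exists s; auto.
Qed.
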